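(* Let $\Omega\subset\mathbb{R}^2$ be a bounded domain, $X\subset\overline{\Omega}$ finite with $X\setminus\partial\Omega\subset\mathrm{int}(\mathrm{conv}(X\cap\partial\Omega))$, $f_X$ a discrete load on $X$, and $E_0,V_0>0$. Then $$\mathcal{C}_{X,\min}\ge\frac{(\mathcal{Z}_X)^2}{2E_0V_0}.$$
   Context: Discrete setting: $\bar n=\#X$, $n=\#(X\setminus\partial\Omega)$, enumeration $\chi:\{1,\dots,n\}\to X\setminus\partial\Omega$; $m=\bar n(\bar n-1)/2$, enumeration $k\mapsto\{\chi_-(k),\chi_+(k)\}$ of unordered pairs of distinct points of $X$. $f_i=f_X(\{\chi(i)\})$, $l_k=|\chi_+(k)-\chi_-(k)|$. Vectors in $\mathbb{R}^n$ are identified with functions on $X$ vanishing on $X\cap\partial\Omega$. $(\mathbf{B}_1\mathbf{u}_1+\mathbf{B}_2\mathbf{u}_2)_k=(u(\chi_+(k))-u(\chi_-(k)))\cdot(\chi_+(k)-\chi_-(k))/l_k$, $(\mathbf{D}\mathbf{w})_k=w(\chi_+(k))-w(\chi_-(k))$. $\mathrm{K}=\{(t_1,t_2,t_3):t_1,t_2\ge0,2t_1t_2\ge t_3^2\}$. $\mathcal{Z}_X:=\min\{\mathbf{l}^\top\mathbf{s}+2\mathbf{l}^\top\mathbf{r}:\mathbf{s},\mathbf{r}\in\mathbb{R}^m_+,\mathbf{q}\in\mathbb{R}^m,\mathbf{B}_1^\top\mathbf{s}=\mathbf{B}_2^\top\mathbf{s}=\mathbf{0},\mathbf{D}^\top\mathbf{q}=\mathbf{f},(r_k,s_k,q_k)\in\mathrm{K}\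 \forall k\}$ (problem $(\mathcal{P}_X)$). For $\mathbf{z}\in\mathbb{R}^n$: $\Delta_k(\mathbf{z})=(\mathbf{D}\mathbf{z})_k/l_k$, $J_{kk}(\mathbf{z})=\sqrt{1+\Delta_k(\mathbf{z})^2}$, $\hat l_k(\mathbf{z})=J_{kk}(\mathbf{z})l_k$; $\mathrm{e}_k(\mathbf{u}_1,\mathbf{u}_2)=(\mathbf{B}_1\mathbf{u}_1+\mathbf{B}_2\mathbf{u}_2)_k/l_k$; $\hat{\mathrm{e}}_k(\mathbf{u}_1,\mathbf{u}_2,\mathbf{w};\mathbf{z})=\dfrac{\mathrm{e}_k(\mathbf{u}_1,\mathbf{u}_2)+\Delta_k(\mathbf{z})\Delta_k(\mathbf{w})}{1+\Delta_k(\mathbf{z})^2}$. Compliance of $(\mathbf{z},\mathbf{a})$, $\mathbf{a}\in\mathbb{R}^m_+$: $\mathcal{C}_X(\mathbf{z},\mathbf{a})=\sup_{\mathbf{u}_1,\mathbf{u}_2,\mathbf{w}\in\mathbb{R}^n}\{\mathbf{f}^\top\mathbf{w}-\frac{E_0}{2}\sum_k((\hat{\mathrm{e}}_k(\mathbf{u}_1,\mathbf{u}_2,\mathbf{w};\mathbf{z}))_+)^2a_k\hat l_k(\mathbf{z})\}$. It is known (standard duality) that equivalently $\mathcal{C}_X(\mathbf{z},\mathbf{a})=\inf\{\frac{1}{2E_0}\sum_k\frac{\hat s_k^2}{a_k}\hat l_k(\mathbf{z}):\hat{\mathbf{s}}\in\mathbb{R}^m_+,\mathbf{B}_1^\top\mathbf{s}=\mathbf{B}_2^\top\mathbf{s}=\mathbf{0},\mathbf{D}^\top\mathbf{q}=\mathbf{f},\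 s_k=\hat s_k/J_{kk}(\mathbf{z}),q_k=\Delta_k(\mathbf{z})\hat s_k/J_{kk}(\mathbf{z})\}$ with $\hat s_k^2/a_k:=0$ if $a_k=\hat s_k=0$ and $+\infty$ if $a_k=0\neq\hat s_k$. $(\mathrm{MCGS}_X)$: $\mathcal{C}_{X,\min}=\inf\{\mathcal{C}_X(\mathbf{z},\mathbf{a}):\mathbf{z}\in\mathbb{R}^n,\mathbf{a}\in\mathbb{R}^m_+,\sum_ka_k\hat l_k(\mathbf{z})\le V_0\}$. *)

(* Defs.v *)
From HB Require Import structures.
From mathcomp Require Import all_boot all_order all_algebra.
From mathcomp Require Import all_classical all_reals all_analysis.
Set Implicit Arguments. Unset Strict Implicit. Unset Printing Implicit Defensive.
Import Order.TTheory GRing.Theory Num.Theory numFieldNormedType.Exports.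
Local Open Scope classical_set_scope.
Local Open Scope ring_scope.

Section Discrete.
Variable R : realType.

Local Notation pt := (R * R)%type.
Definition elen (p q : pt) : R := Num.sqrt ((q.1 - p.1) ^+ 2 + (q.2 - p.2) ^+ 2).

Definition bdry (A : set pt) : set pt := closure A `\` interior A.

Definition bounded_domain (Om : set pt) : Prop :=
  Om !=set0 /\ open Om /\ connected Om /\
  exists M : R, forall p, Om p -> `|p.1| <= M /\ `|p.2| <= M.

Definition conv_hull (nb : nat) (x : 'I_nb -> pt) (P : 'I_nb -> Prop) : set pt :=
  [set p | exists lam : 'I_nb -> R,
      (forall i, 0 <= lam i) /\ (forall i, ~ P i -> lam i = 0) /\
      \sum_(i < nb) lam i = 1 /\
      p = (\sum_(i < nb) lam i * (x i).1, \sum_(i < nb) lam i * (x i).2)].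

Variables (Om : set pt) (nb : nat) (x : 'I_nb -> pt).

Definition onB (i : 'I_nb) : Prop := bdry Om (x i).
(** vectors of R^n = functions on X vanishing on X ∩ ∂Ω *)
Definition vanB (u : 'I_nb -> R) : Prop := forall i, onB i -> u i = 0.

(** Unordered pairs {a,b} of distinct nodes are indexed by a < b, with
    chi_-(k) = a, chi_+(k) = b.  Edge quantities are functions 'I_nb -> 'I_nb -> R
    whose values for a >= b are irrelevant. *)
Definition psum (F : 'I_nb -> 'I_nb -> R) : R :=
  \sum_(a < nb) \sum_(b < nb | (a < b)%N) F a b.

Definition len (a b : 'I_nb) : R := elen (x a) (x b).

Definition Bu (u1 u2 : 'I_nb -> R) (a b : 'I_nb) : R :=
  ((u1 b - u1 a) * ((x b).1 - (x a).1) + (u2 b - u2 a) * ((x b).2 - (x a).2)) / len a b.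
Definition Dw (w : 'I_nb -> R) (a b : 'I_nb) : R := w b - w a.

Definition inc (i a b : 'I_nb) : R := (b == i)%:R - (a == i)%:R.
Definition B1t (s : 'I_nb -> 'I_nb -> R) (i : 'I_nb) : R :=
  psum (fun a b => s a b * inc i a b * ((x b).1 - (x a).1) / len a b).
Definition B2t (s : 'I_nb -> 'I_nb -> R) (i : 'I_nb) : R :=
  psum (fun a b => s a b * inc i a b * ((x b).2 - (x a).2) / len a b).
Definition Dt (q : 'I_nb -> 'I_nb -> R) (i : 'I_nb) : R :=
  psum (fun a b => q a b * inc i a b).

Definition inK (t1 t2 t3 : R) : Prop := 0 <= t1 /\ 0 <= t2 /\ t3 ^+ 2 <= 2 * t1 * t2.

Variable f : 'I_nb -> R.   (* f_i = f_X({chi(i)}) at interior nodes *)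

Definition PX_values : set R :=
  [set v | exists s r q : 'I_nb -> 'I_nb -> R,
     (forall a b, 0 <= s a b) /\ (forall a b, 0 <= r a b) /\
     (forall i, ~ onB i -> B1t s i = 0 /\ B2t s i = 0 /\ Dt q i = f i) /\
     (forall a b : 'I_nb, (a < b)%N -> inK (r a b) (s a b) (q a b)) /\
     v = psum (fun a b => len a b * s a b) + 2 * psum (fun a b => len a b * r a b)].

(** Z_X := min (P_X), taken as the infimum of the feasible values *)
Definition ZX : R := inf PX_values.

Definition Delta (z : 'I_nb -> R) a b : R := Dw z a b / len a b.
Definition Jkk (z : 'I_nb -> R) a b : R := Num.sqrt (1 + Delta z a b ^+ 2).
Definition lhat (z : 'I_nb -> R) a b : R := Jkk z a b * len a b.
Definition ek (u1 u2 : 'I_nb -> R) a b : R := Bu u1 u2 a b / len a b.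
Definition ehat (u1 u2 w z : 'I_nb -> R) a b : R :=
  (ek u1 u2 a b + Delta z a b * Delta w a b) / (1 + Delta z a b ^+ 2).

Variable E0 : R.

Definition CX (z : 'I_nb -> R) (al : 'I_nb -> 'I_nb -> R) : \bar R :=
  ereal_sup [set y | exists u1 u2 w : 'I_nb -> R,
     vanB u1 /\ vanB u2 /\ vanB w /\
     y = (\sum_(i < nb) f i * w i
          - E0 / 2 * psum (fun a b =>
               (Num.max (ehat u1 u2 w z a b) 0) ^+ 2 * al a b * lhat z a b))%:E].

Variable V0 : R.

Definition CXmin : \bar R :=
  ereal_inf [set y | exists (z : 'I_nb -> R) (al : 'I_nb -> 'I_nb -> R),
     vanB z /\ (forall a b, 0 <= al a b) /\
     psum (fun a b => al a b * lhat z a b) <= V0 /\ y = CX z al].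

End Discrete.

(* Main.v *)
Require Import Defs.
From HB Require Import structures.
From mathcomp Require Import all_boot all_order all_algebra.
From mathcomp Require Import all_classical all_reals all_analysis.
Import Order.TTheory GRing.Theory Num.Theory numFieldNormedType.Exports.
Local Open Scope classical_set_scope.
Local Open Scope ring_scope.
From mathcomp Require Import ring lra.
Set Implicit Arguments. Unset Strict Implicit. Unset Printing Implicit Defensive.

Section Farkas.
Variable R : realFieldType.
Variable V : lmodType R.

Definition lin (f : V -> R) := forall k u w, f (k *: u + w) = k * f u + f w.

Lemma lin0 f : lin f -> f 0 = 0.
Proof.
move=> hf; have := hf 1 0 0; rewrite scale1r addr0 mul1r; lra.
Qed.

Lemma linN f v : lin f -> f (- v) = - f v.
Proof.
move=> hf; have := hf (-1) v 0; rewrite addr0 (lin0 hf) addr0 scaleN1r.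
by rewrite mulN1r.
Qed.

Lemma linZ f k v : lin f -> f (k *: v) = k * f v.
Proof. by move=> hf; have := hf k v 0; rewrite addr0 (lin0 hf) addr0. Qed.

Lemma linD f u v : lin f -> f (u + v) = f u + f v.
Proof. by move=> hf; have := hf 1 u v; rewrite scale1r mul1r. Qed.

Lemma farkas (T : eqType) (s : seq T) : uniq s ->
  forall (a : T -> V -> R) (c : V -> R),
  (forall t, lin (a t)) -> lin c ->
  (forall v, (forall t, t \in s -> 0 <= a t v) -> 0 <= c v) ->
  exists lam : T -> R, (forall t, 0 <= lam t) /\
     forall v, c v = \sum_(t <- s) lam t * a t v.
Proof.
elim: s => [|t s IH] /=.
  move=> _ a c ha hc H; exists (fun _ => 0); split=> // v.
  rewrite big_nil; apply/eqP; rewrite eq_le.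
  have h1 := H v (fun t (ht : t \in [::]) => ltac:(by [])).
  have h2 := H (- v) (fun t (ht : t \in [::]) => ltac:(by [])).
  rewrite (linN _ hc) oppr_ge0 in h2.
  by rewrite h1 h2.
move=> /andP[tns us] a c ha hc H.
have [H1|] := pselect (forall v, (forall t', t' \in s -> 0 <= a t' v) -> 0 <= c v).
  have [lam [lam0 hl]] := IH us a c ha hc H1.
  exists (fun t' => if t' == t then 0 else lam t'); split.
    by move=> t'; case: eqP.
  move=> v; rewrite big_cons eqxx mul0r add0r hl.
  apply: eq_big_seq => t' ht'.
  case: eqP => // et; by rewrite -et ht' in tns.
move=> /existsNP [v0] /not_implyP [Hs0 Hc0].
have Hc0' : c v0 < 0 by rewrite ltNge; apply/negP.
have Hd : a t v0 < 0.
  rewrite ltNge; apply/negP => ht0; apply: Hc0; apply: H => t'.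
  by rewrite inE => /orP[/eqP -> //|]; apply: Hs0.
set d := a t v0.
have dn0 : d != 0 by rewrite lt_eqF.
pose a' t' v := a t' v - a t v / d * a t' v0.
pose c' v := c v - a t v / d * c v0.
have ha' : forall t', lin (a' t').
  move=> t' k u w; rewrite /a' !(ha t') !(ha t); ring.
have hc' : lin c'.
  move=> k u w; rewrite /c' !hc !(ha t); ring.
have H' : forall v, (forall t', t' \in s -> 0 <= a' t' v) -> 0 <= c' v.
  move=> v hv.
  pose w := (- (a t v / d)) *: v0 + v.
  have eqa : forall t', a t' w = a' t' v by move=> t'; rewrite /w ha /a'; ring.
  have eqc : c w = c' v by rewrite /w hc /c'; ring.
  rewrite -eqc; apply: H => t'; rewrite inE => /orP[/eqP ->|ht'].
    rewrite /w ha -/d; rewrite mulNr divfK //; lra.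
  by rewrite eqa; apply: hv.
have [mu [mu0 hmu]] := IH us a' c' ha' hc' H'.
pose L := (c v0 - \sum_(t' <- s) mu t' * a t' v0) / d.
exists (fun t' => if t' == t then L else mu t'); split.
  move=> t'; case: eqP => _ //.
  have hS : 0 <= \sum_(t' <- s) mu t' * a t' v0.
    rewrite big_seq; apply: sumr_ge0 => i hi; apply: mulr_ge0 => //; exact: Hs0.
  have -> : L = (\sum_(t' <- s) mu t' * a t' v0 - c v0) / (- d).
    by rewrite /L invrN mulrN -mulNr opprB.
  apply: divr_ge0.
  lra. rewrite /d; lra.
move=> v; rewrite big_cons eqxx.
have -> : \sum_(j <- s) (if j == t then L else mu j) * a j v =
          \sum_(j <- s) mu j * a j v.
  apply: eq_big_seq => t' ht'; case: eqP => // et; by rewrite -et ht' in tns.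
have : c v = c' v + a t v / d * c v0 by rewrite /c'; ring.
move=> ->; rewrite hmu /a' /L.
under eq_bigr do rewrite mulrBr.
rewrite sumrB.
under [X in _ - X]eq_bigr do rewrite mulrCA.
rewrite -mulr_sumr; ring.


Qed.

End Farkas.
Section FarkasInh.
Variable R : realFieldType.
Variable V : lmodType R.
Lemma farkas_inh (T : eqType) (s : seq T) (h : T -> V -> R) (g : V -> R) (Y : R) :
  uniq s -> (forall t, lin (h t)) -> lin g ->
  (forall v, (forall t, t \in s -> h t v <= 1) -> g v <= Y) ->
  exists lam : T -> R, (forall t, 0 <= lam t) /\
     (forall v, g v = \sum_(t <- s) lam t * h t v) /\ \sum_(t <- s) lam t <= Y.
Proof.
move=> us hh hg H.
pose W := (V * R)%type.
pose a (o : option T) (p : W) : R :=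
  if o is Some t then p.2 - h t p.1 else p.2.
pose c (p : W) : R := Y * p.2 - g p.1.
have ha : forall o, @lin R W (a o).
  by move=> [t|] k u w /=; rewrite -[k *: u.2]/(k * u.2) ?(hh t); ring.
have hc : @lin R W c by move=> k u w; rewrite /c /= -[k *: u.2]/(k * u.2) hg; ring.
have uo : uniq (None :: map Some s).
  rewrite /= map_inj_uniq ?us ?andbT; last by move=> ? ? [].
  by apply/mapP => -[].
have H' : forall p : W, (forall o, o \in None :: map Some s -> 0 <= a o p) -> 0 <= c p.
  move=> [v tau] hp.
  have tau0 : 0 <= tau by exact: (hp None (mem_head _ _)).
  have hs : forall t, t \in s -> h t v <= tau.
    move=> t ts; have := hp (Some t); rewrite inE map_f ?orbT // => /(_ isT) /=.
    lra.
  rewrite /c /=.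
  have [tpos|] := ltrP 0 tau.
    have := H (tau^-1 *: v).
    rewrite (linZ _ _ hg) => Hg.
    have : tau^-1 * g v <= Y.
      apply: Hg => t ts; rewrite (linZ _ _ (hh t)).
      by rewrite mulrC ler_pdivrMr // mul1r; apply: hs.
    rewrite mulrC ler_pdivrMr //; lra.
  move=> tle; have t0 : tau = 0 by apply/eqP; rewrite eq_le tle tau0.
  rewrite t0 mulr0 sub0r oppr_ge0.
  rewrite leNgt; apply/negP => gpos.
  pose k := (`|Y| + 1) / g v.
  have kpos : 0 < k by apply: divr_gt0 => //; lra.
  have := H (k *: v).
  rewrite (linZ _ _ hg) /k divfK ?gt_eqF //.
  have : Y <= `|Y| by exact: ler_norm.
  move=> hY hk; suff : `|Y| + 1 <= Y by lra.
  apply: hk => t ts; rewrite (linZ _ _ (hh t)).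
  have := hs t ts; rewrite t0 => ht.
  have : (`|Y| + 1) / g v * h t v <= 0.
    by apply: mulr_ge0_le0 => //; apply: ltW.
  lra.
have [lam [lam0 hl]] := farkas uo ha hc H'.
exists (fun t => lam (Some t)); split => //.
have E : forall p : W, c p = lam None * p.2 + \sum_(t <- s) lam (Some t) * (p.2 - h t p.1).
  by move=> p; rewrite hl big_cons big_map.
split.
  move=> v; have := E (v, 0); rewrite /c /= mulr0 sub0r mulr0 add0r.
  under eq_bigr do rewrite sub0r mulrN.
  rewrite sumrN => /eqP; rewrite eqr_opp => /eqP //.
have := E (0, 1); rewrite /c /= (lin0 hg) mulr1 subr0.
under eq_bigr do rewrite (lin0 (hh _)) subr0 mulr1.
have := lam0 None; lra.
Qed.
End FarkasInh.

Unset Implicit Arguments.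
Lemma final_step (R : realType) (Z c : R) (X : \bar R) :
  0 < c -> 0 <= Z -> (0%:E <= X)%E ->
  (forall Y, 0 <= Y -> Y < Z -> ((Y ^+ 2 / c)%:E <= X)%E) ->
  ((Z ^+ 2 / c)%:E <= X)%E.
Proof.
move=> c0 Z0; case: X => [r| |] //=; last by move=> *; rewrite leey.
rewrite !lee_fin => r0 H.
rewrite leNgt; apply/negP => hr.
have rc : r * c < Z ^+ 2 by rewrite -ltr_pdivlMr.
have Zp : 0 < Z.
  rewrite lt_def Z0 andbT; apply/negP => /eqP Ze; move: rc; rewrite Ze.
  have : 0 <= r * c by apply: mulr_ge0 => //; apply: ltW.
  rewrite expr0n /=; lra.
pose Y := (Z ^+ 2 + r * c) / (2 * Z).
have rc0 : 0 <= r * c by apply: mulr_ge0 => //; apply: ltW.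
have Y0 : 0 <= Y by apply: divr_ge0; [lra|lra].
have YZ : Y < Z.
  rewrite /Y ltr_pdivrMr; last lra.
  have : Z ^+ 2 = Z * Z by rewrite expr2.
  lra.
have := H Y Y0 YZ; rewrite lee_fin ler_pdivrMr // => HY.
have E : Y ^+ 2 - r * c = (Z ^+ 2 - r * c) ^+ 2 / (2 * Z) ^+ 2.
  rewrite /Y; field; lra.
have : 0 < (Z ^+ 2 - r * c) ^+ 2 / (2 * Z) ^+ 2.
  apply: divr_gt0; apply: exprn_gt0; lra.
lra.
Qed.

Theorem lemma6p1 (R : realType) (Om : set (R * R)%type) (nb : nat) (x : 'I_nb -> (R * R)%type)
  (f : 'I_nb -> R) (E0 V0 : R) :
  bounded_domain Om ->
  injective x ->
  (forall i, closure Om (x i)) ->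
  (forall i, ~ onB Om x i -> interior (conv_hull x (onB Om x)) (x i)) ->
  0 < E0 -> 0 < V0 ->
  (((ZX Om x f) ^+ 2 / (2 * E0 * V0))%:E <= CXmin Om x f E0 V0)%E.
Proof.
move=> _ _ _ _ E0p V0p.
have lenge0 : forall a b, 0 <= len x a b by move=> a b; exact: sqrtr_ge0.
have psumge0 : forall F : 'I_nb -> 'I_nb -> R, (forall a b, 0 <= F a b) -> 0 <= psum F.
  by move=> F HF; apply: sumr_ge0 => a _; apply: sumr_ge0 => b _.
have PXge0 : forall v, PX_values Om x f v -> 0 <= v.
  move=> v [s [r [q [s0 [r0 [_ [_ ->]]]]]]].
  apply: addr_ge0; [|apply: mulr_ge0 => //]; apply: psumge0 => a b;
    by apply: mulr_ge0.
set Z := ZX Om x f.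
have Zlb : forall v, PX_values Om x f v -> Z <= v.
  move=> w hw; apply: ge_inf => //; exists 0 => w0 hw0; exact: PXge0.
have Z0 : 0 <= Z.
  have [ne|e] := pselect (PX_values Om x f !=set0).
    by apply: lb_le_inf => // w hw; exact: PXge0.
  have E : PX_values Om x f = set0.
    by apply/seteqP; split => // w hw; apply: e; exists w.
  by rewrite /Z /ZX E inf0.
apply: le_ereal_inf_tmp => y [z [al [vz [al0 [vol ->]]]]].
pose msk (M : 'M[R]_(3, nb)) (j : 'I_3) (i : 'I_nb) : R :=
  (~~ `[< onB Om x i >])%:R * M j i.
pose h (p : 'I_nb * 'I_nb) (M : 'M[R]_(3, nb)) :=
  ehat x (msk M 0) (msk M 1) (msk M 2) z p.1 p.2.
pose g (M : 'M[R]_(3, nb)) := \sum_i f i * msk M 2 i.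
have mskvan : forall M j, vanB Om x (msk M j).
  by move=> M j i hi; rewrite /msk asboolT // mul0r.
have hlin : forall p, lin (h p).
  move=> [a b] k u w; rewrite /h /ehat /ek /Bu /Delta /Dw /msk /= !mxE; ring.
have glin : lin g.
  move=> k u w; rewrite /g mulr_sumr -big_split /=; apply: eq_bigr => i _.
  rewrite /msk !mxE; ring.
pose s := enum [pred p : 'I_nb * 'I_nb | (p.1 < p.2)%N].
have us : uniq s by exact: enum_uniq.
have psumE : forall F : 'I_nb -> 'I_nb -> R, psum F = \sum_(p <- s) F p.1 p.2.
  move=> F; rewrite /psum (pair_big_dep xpredT (fun a b : 'I_nb => (a < b)%N) F) /s big_enum; apply: eq_bigl => p.
  by rewrite inE.
have key : forall Y, 0 <= Y -> Y < Z ->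
    exists M, (forall p, p \in s -> h p M <= 1) /\ Y <= g M.
  move=> Y Y0 YZ; apply: contrapT => nE.
  have HF : forall M, (forall p, p \in s -> h p M <= 1) -> g M <= Y.
    move=> M hM; rewrite leNgt; apply/negP => lt; apply: nE; exists M.
    by split => //; apply: ltW.
  have [lam [lam0 [hl hsum]]] := farkas_inh us hlin glin HF.
  pose Dl a b := Delta x z a b.
  pose ss a b := lam (a, b) / (len x a b * (1 + Dl a b ^+ 2)).
  pose qq a b := Dl a b * ss a b.
  pose rr a b := Dl a b ^+ 2 * ss a b / 2.
  have K0 : forall a b, 0 < 1 + Dl a b ^+ 2.
    by move=> a b; have := sqr_ge0 (Dl a b); lra.
  have ss0 : forall a b, 0 <= ss a b.
    move=> a b; apply: divr_ge0 => //; apply: mulr_ge0 => //; exact: ltW.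
  have rr0 : forall a b, 0 <= rr a b.
    by move=> a b; apply: divr_ge0 => //; apply: mulr_ge0 => //; exact: sqr_ge0.
  pose E (j0 : 'I_3) (i : 'I_nb) := \matrix_(j < 3, k < nb) (((j == j0) && (k == i))%:R : R).
  have mskE : forall j0 i j k, ~ onB Om x i ->
      msk (E j0 i) j k = (j == j0)%:R * (k == i)%:R.
    move=> j0 i j k hi; rewrite /msk mxE; case: (eqVneq k i) => [->|ne].
      by rewrite asboolF //= mul1r andbT mulr1.
    by rewrite andbF !mulr0.
  have PXv : PX_values Om x f (psum (fun a b => len x a b * ss a b) +
                               2 * psum (fun a b => len x a b * rr a b)).
    exists ss, rr, qq; split; first by [].
    split; first by [].
    split; last first.
      split; last by [].
      move=> a b _; split; first exact: rr0.
      split; first exact: ss0.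
      suff -> : qq a b ^+ 2 = 2 * rr a b * ss a b by exact: lexx.
      by rewrite /qq /rr; field.
    move=> i hi.
    have e10 : ((1 : 'I_3) == 0) = false by [].
    have e20 : ((2 : 'I_3) == 0) = false by [].
    have e01 : ((0 : 'I_3) == 1) = false by [].
    have e21 : ((2 : 'I_3) == 1) = false by [].
    have e02 : ((0 : 'I_3) == 2) = false by [].
    have e12 : ((1 : 'I_3) == 2) = false by [].
    split.
      transitivity (\sum_(p <- s) lam p * h p (E 0 i)).
        rewrite /B1t psumE; apply: eq_bigr => -[a b] _ /=.
        rewrite /h /ehat /ek /Bu /Delta /Dw /= !mskE // eqxx e10 e20 /= /inc /ss /Dl /Delta /Dw.
        rewrite invfM; ring.
      rewrite -hl /g big1 // => k _; rewrite mskE // e20 /=; ring.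
    split.
      transitivity (\sum_(p <- s) lam p * h p (E 1 i)).
        rewrite /B2t psumE; apply: eq_bigr => -[a b] _ /=.
        rewrite /h /ehat /ek /Bu /Delta /Dw /= !mskE // eqxx e01 e21 /= /inc /ss /Dl /Delta /Dw.
        rewrite invfM; ring.
      rewrite -hl /g big1 // => k _; rewrite mskE // e21 /=; ring.
    transitivity (\sum_(p <- s) lam p * h p (E 2 i)).
      rewrite /Dt psumE; apply: eq_bigr => -[a b] _ /=.
      rewrite /h /ehat /ek /Bu /Delta /Dw /= !mskE // eqxx e02 e12 /= /inc /qq /ss /Dl /Delta /Dw.
      rewrite invfM; ring.
    rewrite -hl /g (bigD1 i) //= mskE // !eqxx /= big1 ?addr0; first ring.
    by move=> k ki; rewrite mskE // (negbTE ki) /=; ring.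
  have := Zlb _ PXv.
  have : psum (fun a b => len x a b * ss a b) + 2 * psum (fun a b => len x a b * rr a b)
         <= \sum_(p <- s) lam p.
    rewrite !psumE mulr_sumr -big_split /=; apply: ler_sum => -[a b] _ /=.
    have [->|ln0] := eqVneq (len x a b) 0.
      by rewrite !mul0r mulr0 addr0.
    rewrite /rr /ss.
    rewrite le_eqVlt; apply/orP; left; apply/eqP.
    field.
    by apply/andP; split => //; rewrite gt_eqF.
  lra.
have comp : forall Y M, 0 <= Y -> (forall p, p \in s -> h p M <= 1) -> Y <= g M ->
    ((Y ^+ 2 / (2 * E0 * V0))%:E <= CX Om x f E0 z al)%E.
  move=> Y M Y0 hM hY.
  pose tt := Y / (E0 * V0).
  have tt0 : 0 <= tt by apply: divr_ge0 => //; apply: mulr_ge0; apply: ltW.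
  pose M' := tt *: M.
  have hM' : forall p, h p M' = tt * h p M by move=> p; exact: linZ.
  have gM' : g M' = tt * g M by exact: linZ.
  apply: (@le_trans _ _ ((g M' - E0 / 2 * psum (fun a b =>
      (Num.max (h (a, b) M') 0) ^+ 2 * al a b * lhat x z a b))%:E)); last first.
    apply: ereal_sup_ubound; exists (msk M' 0), (msk M' 1), (msk M' 2).
    by split; [|split; [|split]].
  rewrite lee_fin.
  have Pb : psum (fun a b => (Num.max (h (a, b) M') 0) ^+ 2 * al a b * lhat x z a b)
            <= tt ^+ 2 * V0.
    apply: le_trans (ler_wpM2l (sqr_ge0 tt) vol).
    rewrite /psum mulr_sumr; apply: ler_sum => a _; rewrite mulr_sumr.
    apply: ler_sum => b ab.
    have hb : h (a, b) M <= 1 by apply: hM; rewrite mem_enum inE.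
    rewrite hM'.
    set m := Num.max (tt * h (a, b) M) 0.
    have m0 : 0 <= m by rewrite le_max lexx orbT.
    have mt : m <= tt.
      rewrite ge_max tt0 andbT; have := ler_wpM2l tt0 hb; rewrite mulr1 //.
    have lh0 : 0 <= al a b * lhat x z a b.
      by apply: mulr_ge0 => //; apply: mulr_ge0; [exact: sqrtr_ge0|exact: lenge0].
    rewrite -mulrA; apply: ler_wpM2r => //.
    by rewrite !expr2; apply: ler_pM.
  rewrite gM'.
  have h1 : tt * Y <= tt * g M by apply: ler_wpM2l.
  have h2 := ler_wpM2l (ltW (divr_gt0 E0p (ltr0Sn _ 1))) Pb.
  have h3 : tt * Y - E0 / 2 * (tt ^+ 2 * V0) = Y ^+ 2 / (2 * E0 * V0).
    rewrite /tt; field.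
    by apply/andP; split; rewrite gt_eqF.
  lra.
apply: final_step.
- by apply: mulr_gt0 => //; apply: mulr_gt0.
- exact: Z0.
- have := comp 0 0 (lexx 0).
  rewrite expr0n /= mul0r; apply.
    by move=> p _; rewrite (lin0 (hlin p)) ler01.
  by rewrite (lin0 glin).
move=> Y Y0 YZ; have [M [hM hY]] := key Y Y0 YZ. exact: (comp Y M Y0 hM hY).
Qed.
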